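(* For integers $q\ge1$, $a$, $n$ let $S(q,a,n)=\sum_{x=1}^q e\big(\frac{ax^2+nx}{q}\big)$, and for integers $n_1,n_2,n_3,m$ let $$T(q;n_1,n_2,n_3,m)=\sum_{\substack{a=1\\ (a,q)=1}}^q S(q,a,n_1)S(q,a,n_2)S(q,a,n_3)\,e\Big(\frac{\overline{a}\,m}{q}\Big),$$ where $\overline{a}$ is the inverse of $a$ modulo $q$. Let $p>2$ be a prime. Then for every positive integer $r$ and all integers $n_1,n_2,n_3,m$, $$|T(p^r;n_1,n_2,n_3,m)|\le p^{5r/2},$$ and moreover $$|T(p;n_1,n_2,n_3,m)|\le p^{2}.$$
   Context: $e(z)=e^{2\pi i z}$. *)

(* Defs.v *)
From HB Require Import structures.
From mathcomp Require Import all_boot all_order all_algebra.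
From mathcomp Require Import all_classical all_reals.
From mathcomp Require Import exp trigo.
From mathcomp Require Export complex.
Set Implicit Arguments. Unset Strict Implicit. Unset Printing Implicit Defensive.
Import Order.TTheory GRing.Theory Num.Theory.
Local Open Scope ring_scope.
Local Open Scope complex_scope.

Definition ee (R : realType) (z : R) : R[i] :=
  (cos (2 * pi * z)) +i* (sin (2 * pi * z)).

Definition S (R : realType) (q : nat) (a n : int) : R[i] :=
  \sum_(1 <= x < q.+1) ee ((a * (x%:Z) ^+ 2 + n * x%:Z)%:~R / (q%:R : R)).

(* an inverse of a modulo q (some b in [0,q) with a*b = 1 mod q, 0 if none) *)
Definition invmod (q a : nat) : nat :=
  odflt 0%N (omap (@nat_of_ord q) [pick b : 'I_q | a * b == 1 %[mod q]]%N).

Definition T (R : realType) (q : nat) (n1 n2 n3 m : int) : R[i] :=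
  \sum_(1 <= a < q.+1 | coprime a q)
     S R q a%:Z n1 * S R q a%:Z n2 * S R q a%:Z n3
     * ee (((invmod q a)%:Z * m)%:~R / (q%:R : R)).

(* Main.v *)
Require Import Defs.
From HB Require Import structures.
From mathcomp Require Import all_boot all_order all_algebra all_fingroup all_solvable all_field.
From mathcomp Require Import all_classical all_reals.
From mathcomp Require Import exp trigo complex.
From mathcomp Require Import ring lra.
Import Order.TTheory GRing.Theory Num.Theory.
Local Open Scope ring_scope.
Local Open Scope complex_scope.

Section Basic.
Variable R : realType.
Local Notation C := (R[i]).

Lemma ee_add (x y : R) : ee (x + y) = ee x * ee y.
Proof.
rewrite /ee mulrDr cosD sinD; apply/eqP; rewrite eq_complex /=; apply/andP; split; apply/eqP; ring.
Qed.

Lemma ee0 : ee (0 : R) = 1.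
Proof. by rewrite /ee mulr0 cos0 sin0. Qed.

Lemma ee_nat (n : nat) : ee (n%:R : R) = 1.
Proof.
elim: n => [|n IH]; first by rewrite ee0.
rewrite -addn1 natrD ee_add IH mul1r /ee mulr1.
have -> : 2 * pi = pi *+ 2 :> R by rewrite mulr_natl.
by rewrite -[pi *+ 2]add0r cosD2pi sinD2pi cos0 sin0.
Qed.

Lemma ee_opp (x : R) : ee (- x) * ee x = 1.
Proof. by rewrite -ee_add addNr ee0. Qed.

Lemma ee_int (k : int) : ee (k%:~R : R) = 1.
Proof.
case: k => n; first by rewrite ee_nat.
rewrite NegzE -(mul1r (ee _)) -[X in X * _](ee_nat n.+1) mulrC.
by rewrite rmorphN /= ee_opp.
Qed.

Lemma ee_conj (x : R) : (ee x)^* = ee (- x).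
Proof. by rewrite /ee mulrN cosN sinN. Qed.

Lemma norm_ee (x : R) : `|ee x| = 1.
Proof.
have h : `|ee x| ^+ 2 = 1 by rewrite sqr_normc ee_conj mulrC ee_opp.
have : (`|ee x| ^+ 2 == 1 ^+ 2) by rewrite h expr1n.
by rewrite eqrXn2 // => /eqP.
Qed.

Lemma cos_eq1_half (u : R) : 0 <= u <= 1/2 -> cos (2 * pi * u) = 1 -> u = 0.
Proof.
move=> /andP[u0 u1] hc.
have pi0 := pi_gt0 R.
have : cos (2 * pi * u) = cos 0 by rewrite hc cos0.
move/cos_inj; rewrite !in_itv /= lexx (ltW pi0).
have h1 : 0 <= 2 * pi * u by rewrite !mulr_ge0 // ltW.
have h2 : 2 * pi * u <= pi by nra.
rewrite h1 h2 => /(_ isT isT) /eqP; rewrite !mulf_eq0 (gt_eqF pi0) /= => /orP[|/eqP//].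
by rewrite pnatr_eq0.
Qed.

Lemma ee_neq1 (t : R) : 0 < t < 1 -> ee t != 1.
Proof.
move=> /andP[t0 t1]; apply/negP => /eqP E.
have hc : cos (2 * pi * t) = 1 by move: E => [-> _].
have [th|th] := lerP t (1/2).
  have ht : t = 0 by apply: cos_eq1_half => //; rewrite (ltW t0) th.
  by move: t0; rewrite ht ltxx.
have : cos (2 * pi * (1 - t)) = 1.
  rewrite mulrBr mulr1 addrC.
  have -> : 2 * pi = pi *+ 2 :> R by rewrite mulr_natl.
  by rewrite cosD2pi cosN -mulr_natl hc.
move/cos_eq1_half => h.
have : 1 - t = 0 by apply: h; apply/andP; split; lra.
lra.
Qed.

Definition E (q : nat) (k : int) : C := ee ((k%:~R : R) / (q%:R : R)).

Variable q : nat.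
Hypothesis q0 : (0 < q)%N.

Lemma qR0 : (q%:R : R) != 0.
Proof. by rewrite pnatr_eq0 -lt0n. Qed.

Lemma E_add k l : E q (k + l) = E q k * E q l.
Proof. by rewrite /E intrD mulrDl ee_add. Qed.

Lemma E0 : E q 0 = 1.
Proof. by rewrite /E mul0r ee0. Qed.

Lemma E_per k j : E q (k + j * q%:Z) = E q k.
Proof.
rewrite E_add /E intrM mulfK ?qR0 //.
by rewrite ee_int mulr1.
Qed.

Lemma E_mod k : E q k = E q (k %% q)%Z.
Proof. by rewrite {1}(divz_eq k q) addrC E_per. Qed.

Lemma E_opp k : conjc (E q k) = E q (- k).
Proof. by rewrite /E ee_conj intrN mulNr. Qed.

Lemma E_opp' k : Num.conj (E q k) = E q (- k).
Proof. exact: E_opp. Qed.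

Lemma E_oppM k : E q (- k) * E q k = 1.
Proof. by rewrite -E_add addNr E0. Qed.

Lemma normE k : `|E q k| = 1.
Proof. exact: norm_ee. Qed.

Lemma E_exp k n : E q k ^+ n = E q (k * n%:Z).
Proof.
elim: n => [|n IH]; first by rewrite expr0 mulr0 E0.
by rewrite exprS IH -E_add; congr (E q _); rewrite -addn1 PoszD mulrDr mulr1 addrC.
Qed.

Lemma E_eq1 k : E q k = 1 -> (q%:Z %| k)%Z.
Proof.
rewrite E_mod => h; apply/dvdz_mod0P; case: (eqVneq (k %% q)%Z 0) => // hn; exfalso.
have q0' : (q%:Z != 0) by rewrite eqz_nat -lt0n.
have m0 := modz_ge0 k q0'.
have m1 : ((k %% q)%Z < q%:Z) by apply: ltz_pmod; rewrite ltz_nat.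
have : ee (((k %% q)%Z)%:~R / (q%:R : R)) != 1.
  apply: ee_neq1; apply/andP; split.
    by rewrite divr_gt0 ?ltr0n // ltr0z lt_neqAle eq_sym hn m0.
  rewrite ltr_pdivrMr ?ltr0n // mul1r.
  by have := m1; rewrite -(ltr_int R) => /=.
by rewrite /E in h; rewrite h eqxx.
Qed.

Lemma orth k : \sum_(0 <= y < q) E q (k * y%:Z) = if (q%:Z %| k)%Z then q%:R else 0.
Proof.
case: ifP => hk.
  rewrite (eq_bigr (fun=> 1)); first by rewrite sumr_const_nat subn0.
  move=> y _; case/dvdzP: hk => j ->.
  by rewrite mulrAC -[X in E q X]add0r E_per E0.
have hw : E q k != 1 by apply/negP => /eqP/E_eq1; rewrite hk.
under eq_bigr do rewrite -E_exp.
have : (E q k - 1) * \sum_(0 <= y < q) E q k ^+ y = 0.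
  rewrite big_mkord -subrX1 E_exp.
  have -> : E q (k * q%:Z) = 1 by rewrite -[k * _]add0r E_per E0.
  by rewrite subrr.
rewrite big_mkord.
by move/eqP; rewrite mulf_eq0 subr_eq0 (negbTE hw) /= => /eqP.
Qed.

Lemma sum1q (f : nat -> C) : (forall x, f (x + q)%N = f x) ->
  \sum_(1 <= x < q.+1) f x = \sum_(0 <= x < q) f x.
Proof.
move=> hf.
rewrite big_nat_recr //= -(add0n q) hf add0n.
rewrite [RHS](big_ltn q0) addrC.
by rewrite big_add1.
Qed.

Lemma sum_shift (f : nat -> C) y : (forall x, f (x + q)%N = f x) ->
  \sum_(0 <= x < q) f (x + y)%N = \sum_(0 <= x < q) f x.
Proof.
move=> hf; elim: y => [|y IH]; first by under eq_bigr do rewrite addn0.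
rewrite -IH.
have -> : \sum_(0 <= x < q) f (x + y.+1)%N = \sum_(1 <= x < q.+1) f (x + y)%N.
  by rewrite big_add1 /=; apply: eq_bigr => i _; rewrite addSnnS addnC addSn addnC.
by rewrite sum1q // => x; rewrite addnAC hf.
Qed.

Lemma S_sum (a n : int) :
  S R q a n = \sum_(0 <= x < q) E q (a * x%:Z ^+ 2 + n * x%:Z).
Proof.
rewrite /S; apply: (sum1q (fun x : nat => E q (a * x%:Z ^+ 2 + n * x%:Z))) => x.
have -> : a * (x + q)%N%:Z ^+ 2 + n * (x + q)%N%:Z =
   (a * x%:Z ^+ 2 + n * x%:Z) + (2 * a * x%:Z + a * q%:Z + n) * q%:Z.
  by rewrite PoszD; ring.
by rewrite E_per.
Qed.

Lemma S_norm2 (a : nat) (n : int) : odd q -> coprime a q ->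
  S R q a%:Z n * conjc (S R q a%:Z n) = q%:R.
Proof.
move=> oq cop.
pose f (x : nat) : int := a%:Z * x%:Z ^+ 2 + n * x%:Z.
rewrite S_sum -/f.
have -> : conjc (\sum_(0 <= x < q) E q (f x)) = \sum_(0 <= x < q) E q (- f x).
  rewrite (big_morph (@conjc R) (id1 := 0) (op1 := +%R) (op2 := +%R)).
  - by apply: eq_bigr => i _; rewrite E_opp.
  - by move=> x y; rewrite raddfD.
  - by rewrite raddf0.
rewrite big_distrl /=.
under eq_bigr do rewrite big_distrr /=.
rewrite exchange_big /=.
have step : forall y : nat, \sum_(0 <= x < q) E q (f x) * E q (- f y) =
    \sum_(0 <= h < q) E q (f h) * E q ((2 * a%:Z * h%:Z) * y%:Z).
  move=> y.
  rewrite -(sum_shift (fun x => E q (f x) * E q (- f y)) y); last first.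
    move=> x; congr (_ * _); rewrite /f.
    have -> : a%:Z * (x + q)%N%:Z ^+ 2 + n * (x + q)%N%:Z =
      (a%:Z * x%:Z ^+ 2 + n * x%:Z) + (2 * a%:Z * x%:Z + a%:Z * q%:Z + n) * q%:Z.
      by rewrite PoszD; ring.
    by rewrite E_per.
  apply: eq_bigr => h _.
  rewrite -!E_add; congr (E q _); rewrite /f PoszD; ring.
rewrite (eq_bigr _ (fun y _ => step y)) exchange_big /=.
under eq_bigr do rewrite -big_distrr /= orth.
rewrite big_ltn //.
have -> : (q%:Z %| 2 * a%:Z * 0%:Z)%Z by rewrite mulr0 dvdz0.
have -> : f 0%N = 0 by rewrite /f; ring.
rewrite E0 mul1r.
rewrite big_nat big1 ?addr0 // => h /andP[h1 h2].
case: ifP => [hd|]; last by rewrite mulr0.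
exfalso.
move: hd; rewrite dvdzE !abszM /= Gauss_dvdr; last first.
  rewrite (_ : (1 + 1 = 2)%N) // coprimeMr coprimen2 oq.
  by rewrite coprime_sym cop.
by move/(dvdn_leq h1); rewrite leqNgt h2.
Qed.
End Basic.

Lemma odd_p p : prime p -> (2 < p)%N -> odd p.
Proof.
move=> hp hp2; case/boolP: (odd p) => // /(prime_oddPn hp) h.
by rewrite h in hp2.
Qed.

Lemma normS (R : realType) q (q0 : (0 < q)%N) (s : R) a n :
  odd q -> coprime a q -> 0 <= s -> s ^+ 2 = q%:R -> `|S R q a%:Z n| = s%:C.
Proof.
move=> oq cop s0 hs.
have h : `|S R q a%:Z n| ^+ 2 == s%:C ^+ 2.
  by rewrite sqr_normc (@S_norm2 R q q0 a n oq cop) -rmorphXn hs rmorph_nat.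
by move: h; rewrite eqrXn2 // ?ler0c // => /eqP.
Qed.

Lemma part1 (R : realType) (p : nat) (hp : prime p) (hp2 : (2 < p)%N) r n1 n2 n3 m :
  (0 < r)%N ->
  `|T R (p ^ r)%N n1 n2 n3 m| <= ((p%:R : R) `^ (5 * r%:R / 2))%:C.
Proof.
move=> r0.
set q := (p ^ r)%N.
have q0 : (0 < q)%N by rewrite expn_gt0 prime_gt0.
have oq : odd q by rewrite oddX odd_p // orbT.
set s := (p%:R : R) `^ (r%:R / 2).
have s0 : 0 <= s by apply: powR_ge0.
have p0 : (0 : R) <= p%:R by rewrite ler0n.
have hs : s ^+ 2 = q%:R.
  rewrite -powR_mulrn // -powRrM mulfVK ?pnatr_eq0 // powR_mulrn //.
  by rewrite /q natrX.
have -> : (p%:R : R) `^ (5 * r%:R / 2) = s ^+ 5.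
  by rewrite -powR_mulrn // /s -powRrM; congr (_ `^ _); ring.
rewrite /T; apply: le_trans (ler_norm_sum _ _ _) _.
have -> : (s ^+ 5)%:C = \sum_(1 <= a < q.+1) (s%:C) ^+ 3.
  rewrite sumr_const_nat subSS subn0 -rmorphXn -rmorphMn; congr (_%:C).
  by rewrite -mulr_natr -hs -exprD.
rewrite big_mkcond /=; apply: ler_sum => a _; case: ifP => cop.
  rewrite !normrM norm_ee mulr1 !(@normS R q q0 s a _ oq cop s0 hs).
  by rewrite -!mulrA -expr2 -exprS.
by rewrite exprn_ge0 // ler0c.
Qed.

Section Fp.
Variable p : nat.
Hypothesis hp : prime p.
Hypothesis hp2 : (2 < p)%N.
Local Notation F := ('F_p : finFieldType).

Lemma oddp : odd p.
Proof.
case/boolP: (odd p) => // /(prime_oddPn hp) h.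
by move: hp2; rewrite h.
Qed.

Definition kk := p./2.

Lemma p_eq : p = (kk.*2).+1.
Proof. by rewrite /kk -[in LHS](odd_double_half p) oddp. Qed.

Lemma kk_gt0 : (0 < kk)%N.
Proof. by rewrite /kk half_gt0 ltnW. Qed.

Lemma fermat (x : F) : x != 0 -> x ^+ kk.*2 = 1.
Proof.
move=> x0; have : x ^+ (kk.*2).+1 = x.
  by rewrite -p_eq -[X in x ^+ X](card_Fp hp) expf_card.
rewrite exprS.
by move/(congr1 (fun y => x^-1 * y)); rewrite mulrA mulVf // mul1r.
Qed.

Lemma two_neq0 : (2%:R : F) != 0.
Proof.
apply/eqP => /(congr1 (@nat_of_ord _)).
by rewrite (val_Fp_nat hp) modn_small.
Qed.

Lemma one_neq_m1 : (1 : F) != -1.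
Proof.
apply/eqP => h; have := two_neq0.
by rewrite -[2%:R]/(1 + 1 : F) {2}h subrr eqxx.
Qed.

Lemma pow_pm1 (t : F) : t != 0 -> (t ^+ kk == 1) || (t ^+ kk == -1).
Proof. by move=> t0; rewrite -sqrf_eq1 -exprM muln2 fermat. Qed.

Lemma sq_pow (s : F) : s != 0 -> (s ^+ 2) ^+ kk = 1.
Proof. by move=> s0; rewrite -exprM mul2n fermat. Qed.

Lemma pow_sq (t : F) : t != 0 -> t ^+ kk = 1 -> exists s, t = s ^+ 2.
Proof.
move=> t0 tk.
have [g gin gprim] : exists2 g, g \in enum (predC1 (0 : F)) & (kk.*2).-primitive_root g.
  apply/hasP; apply: has_prim_root.
  - by rewrite double_gt0 kk_gt0.
  - by apply/allP => x; rewrite mem_enum /= => hx; rewrite unity_rootE fermat.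
  - exact: enum_uniq.
  - by rewrite -cardE cardC1 card_Fp // {1}p_eq.
have [i hi] := prim_rootP gprim (@fermat t t0).
have : (kk.*2 %| i * kk)%N.
  by rewrite (prim_order_dvd gprim) exprM -hi tk.
move: (nat_of_ord i) hi => i' hi.
rewrite -mul2n dvdn_pmul2r ?kk_gt0 // => /dvdnP [j hj].
by exists (g ^+ j); rewrite hi hj -exprM mulnC.
Qed.
End Fp.

Lemma sum_ord_nat (R : realType) n N (e : n = N) (g : nat -> R[i]) :
  \sum_(i : 'I_n) g i = \sum_(0 <= i < N) g i.
Proof. by rewrite -e big_mkord. Qed.

Section Part2.
Variable R : realType.
Variable p : nat.
Hypothesis hp : prime p.
Hypothesis hp2 : (2 < p)%N.
Local Notation F := ('F_p : finFieldType).
Local Notation C := (R[i]).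

Lemma p0 : (0 < p)%N.
Proof. exact: prime_gt0. Qed.

Definition psi (u : F) : C := E R p (nat_of_ord u)%:Z.

Lemma psi_nat n : psi (n%:R) = E R p n%:Z.
Proof. by rewrite /psi val_Fp_nat // [RHS](@E_mod R p p0) modz_nat. Qed.

Lemma psi_add u v : psi (u + v) = psi u * psi v.
Proof.
by rewrite -[u]natr_Zp -[v]natr_Zp -natrD !psi_nat PoszD (@E_add R p).
Qed.

Lemma psi0 : psi 0 = 1.
Proof. by rewrite -(mulr0n 1) psi_nat (@E0 R p). Qed.

Lemma psi_int (k : int) : psi (k%:~R) = E R p k.
Proof.
case: k => n; first exact: psi_nat.
rewrite NegzE intrN.
have h1 : psi (- (n.+1%:~R)) * psi (n.+1%:~R) = 1 by rewrite -psi_add addNr psi0.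
have h2 := @E_oppM R p (n.+1)%:Z.
rewrite -[psi _]mulr1 -h2 mulrA.
have -> : psi (- n.+1%:~R) * E R p (- n.+1%:Z) = E R p (- n.+1%:Z) * psi (- n.+1%:~R) by rewrite mulrC.
rewrite -mulrA.
have -> : psi (- n.+1%:~R) * E R p n.+1%:Z = 1 by rewrite -[E R p _]psi_nat.
by rewrite mulr1.
Qed.

Lemma sumF (g : nat -> C) : \sum_(u : F) g (nat_of_ord u) = \sum_(0 <= i < p) g i.
Proof. exact: (@sum_ord_nat R _ _ (Fp_cast hp) g). Qed.

Lemma sum_psi : \sum_(u : F) psi u = 0.
Proof.
rewrite /psi (sumF (fun i => E R p i%:Z)).
have := @orth R p p0 1; under eq_bigr do rewrite mul1r.
move=> ->; case: ifP => // h; exfalso.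
move: h; rewrite dvdzE /= dvdn1 => /eqP h1.
by move: hp2; rewrite h1.
Qed.

Lemma sum_psiM c : c != 0 -> \sum_(u : F) psi (c * u) = 0.
Proof.
move=> c0; rewrite -[RHS]sum_psi; apply: esym.
exact: (reindex_inj (mulfI c0)).
Qed.


Definition eps (t : F) : C := if t == 0 then 0 else if t ^+ kk p == 1 then 1 else -1.

Lemma eps0 : eps 0 = 0.
Proof. by rewrite /eps eqxx. Qed.

Lemma m1_neq1 : ((-1 : F) == 1) = false.
Proof. by apply/negbTE; rewrite eq_sym (@one_neq_m1 p hp hp2). Qed.

Lemma epsM s t : eps (s * t) = eps s * eps t.
Proof.
rewrite /eps mulf_eq0; case: (eqVneq s 0) => s0 /=; first by rewrite mul0r.
case: (eqVneq t 0) => t0 /=; first by rewrite mulr0.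
rewrite exprMn.
case/orP: (@pow_pm1 p hp hp2 s s0) => /eqP ->; case/orP: (@pow_pm1 p hp hp2 t t0) => /eqP ->;
  rewrite ?mul1r ?mulr1 ?mulrNN ?mulr1 ?eqxx ?m1_neq1 //.
by rewrite mulN1r opprK.
Qed.

Lemma eps1 : eps 1 = 1.
Proof. by rewrite /eps oner_eq0 expr1n eqxx. Qed.

Lemma eps_sq t : t != 0 -> eps t * eps t = 1.
Proof.
move=> t0; rewrite /eps (negbTE t0).
by case: ifP => _; rewrite ?mulr1 ?mulrNN ?mulr1.
Qed.

Lemma epsV t : eps t^-1 = eps t.
Proof.
case: (eqVneq t 0) => [->|t0]; first by rewrite invr0.
by rewrite -[LHS]mulr1 -(@eps_sq t t0) mulrA -epsM mulVf // eps1 mul1r.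
Qed.

Lemma eps_sqr s : s != 0 -> eps (s ^+ 2) = 1.
Proof.
move=> s0; rewrite /eps sqrf_eq0 (negbTE s0) (@sq_pow p hp hp2 s s0).
by rewrite eqxx.
Qed.

Lemma sum_pred1 (s : F) : \sum_(x : F) ((x == s)%:R : C) = 1.
Proof.
rewrite (bigD1 s) //= eqxx big1 ?addr0 // => x /negbTE ->.
done.
Qed.

Lemma count_sq (t : F) : \sum_(x : F) ((x ^+ 2 == t)%:R : C) = 1 + eps t.
Proof.
case: (eqVneq t 0) => [->|t0].
  rewrite eps0 addr0 -[RHS](sum_pred1 0); apply: eq_bigr => x _.
  by rewrite sqrf_eq0.
case: (boolP (t ^+ kk p == 1)) => tk.
  have [s hs] := @pow_sq p hp hp2 t t0 (eqP tk).
  have s0 : s != 0 by apply: contraNneq t0 => s0; rewrite hs s0 expr0n.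
  have sns : s != - s.
    apply: contra_neq s0 => h.
    have : (2%:R : F) * s = 0 by rewrite mulr2n mulrDl mul1r {1}h addNr.
    by move/eqP; rewrite mulf_eq0 (negbTE (@two_neq0 p hp hp2)) /= => /eqP.
  rewrite /eps (negbTE t0) tk hs.
  rewrite (eq_bigr (fun x => ((x == s)%:R + (x == - s)%:R : C))); last first.
    move=> x _; rewrite eqf_sqr.
    case: (eqVneq x s) => [->|xs] /=; first by rewrite (negbTE sns) addr0.
    by rewrite add0r.
  by rewrite big_split /= !sum_pred1.
rewrite /eps (negbTE t0) (negbTE tk) subrr big1 // => x _.
case: (eqVneq (x ^+ 2) t) => // hx; exfalso.
have x0 : x != 0 by apply: contraNneq t0 => x0; rewrite -hx x0 expr0n.
by move: tk; rewrite -hx (@sq_pow p hp hp2 x x0) eqxx.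
Qed.

Lemma sum_sq (f : F -> C) :
  \sum_(x : F) f (x ^+ 2) = \sum_(t : F) f t + \sum_(t : F) eps t * f t.
Proof.
rewrite -big_split /=.
rewrite (eq_bigr (fun x => \sum_(t : F) ((x ^+ 2 == t)%:R * f t))); last first.
  move=> x _; rewrite (bigD1 (x ^+ 2)) //= eqxx mul1r big1 ?addr0 // => t /negbTE.
  by rewrite eq_sym => ->; rewrite mul0r.
rewrite exchange_big /=; apply: eq_bigr => t _.
by rewrite -big_distrl /= count_sq mulrDl mul1r.
Qed.

Lemma sum_eps : \sum_(t : F) eps t = 0.
Proof.
have h := sum_sq (fun=> 1).
rewrite [X in _ + X](eq_bigr (fun t => eps t)) in h; last by move=> t _; rewrite mulr1.
apply: (addrI (\sum_(t : F) (1 : C))); by rewrite addr0 -h.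
Qed.


Definition tau (c : F) : C := \sum_(t : F) eps t * psi (c * t).
Definition G (c : F) : C := \sum_(x : F) psi (c * x ^+ 2).
Definition g : C := G 1.

Lemma G_tau c : c != 0 -> G c = tau c.
Proof.
move=> c0; rewrite /G (sum_sq (fun t => psi (c * t))) sum_psiM // add0r.
done.
Qed.

Lemma tau0 : tau 0 = 0.
Proof.
rewrite /tau; under eq_bigr do rewrite mul0r psi0 mulr1.
exact: sum_eps.
Qed.

Lemma tau_eps c : c != 0 -> tau c = eps c * g.
Proof.
move=> c0; rewrite /g G_tau ?oner_eq0 // /tau big_distrr /=.
rewrite (reindex_inj (mulfI (invr_neq0 c0))) /=.
apply: eq_bigr => t _.
by rewrite epsM epsV mulrA [in c * _]mulrA mulfV //.
Qed.

Lemma G_eps c : c != 0 -> G c = eps c * g.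
Proof. by move=> c0; rewrite G_tau // tau_eps. Qed.

Lemma complete (A N : F) : A != 0 ->
  \sum_(u : F) psi (A * u ^+ 2 + N * u) = psi (- (N ^+ 2 / (4%:R * A))) * G A.
Proof.
move=> A0.
have t0 := @two_neq0 p hp hp2.
rewrite (reindex_inj (addIr (- (N / (2%:R * A))))) /G big_distrr /=.
apply: eq_bigr => u _; rewrite -psi_add; congr psi.
have f0 : (4%:R : F) != 0 by rewrite (_ : 4 = 2 * 2)%N // natrM mulf_neq0.
field.
by rewrite A0 f0 t0.
Qed.

Lemma S_F (a : nat) (n : int) :
  S R p a%:Z n = \sum_(u : F) psi (a%:R * u ^+ 2 + n%:~R * u).
Proof.
rewrite (@S_sum R p p0).
transitivity (\sum_(0 <= x < p) psi (a%:R * (x%:R) ^+ 2 + n%:~R * x%:R)).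
  apply: eq_bigr => x _; rewrite -psi_int; congr psi.
  by rewrite rmorphD !rmorphM expr2.
rewrite -(sumF (fun x => psi (a%:R * (x%:R) ^+ 2 + n%:~R * x%:R))).
by apply: eq_bigr => u _; rewrite natr_Zp.
Qed.

Lemma S_psi (a : nat) (n : int) : (a%:R : F) != 0 ->
  S R p a%:Z n = psi (- ((n%:~R) ^+ 2 / (4%:R * a%:R))) * (eps a%:R * g).
Proof. by move=> a0; rewrite S_F complete // G_eps. Qed.

Lemma g_norm : g * conjc g = p%:R.
Proof.
have -> : g = S R p 1%:Z 0.
  rewrite S_F /g /G; apply: eq_bigr => u _.
  by rewrite mul0r addr0.
apply: S_norm2 => //; first exact: p0.
  exact: oddp hp hp2.
exact: coprime1n.
Qed.


Lemma val_lt (u : F) : (nat_of_ord u < p)%N.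
Proof. by rewrite -[p in (_ < p)%N](Fp_cast hp) ltn_ord. Qed.

Lemma copF (u : F) : coprime (nat_of_ord u) p = (u != 0).
Proof.
rewrite coprime_sym prime_coprime //.
case: (eqVneq u 0) => [->|u0] /=; first by rewrite dvdn0.
apply/negP => /dvdn_leq.
have : (0 < nat_of_ord u)%N.
  by rewrite lt0n; apply: contra_neq u0 => h; apply: val_inj.
move=> h /(_ h); rewrite leqNgt val_lt.
done.
Qed.

Lemma invmod_F (u : F) : u != 0 -> ((invmod p (nat_of_ord u))%:R : F) = u^-1.
Proof.
move=> u0; rewrite /invmod.
case: pickP => [b hb | none] /=.
  have h : ((nat_of_ord u * b)%:R : F) = 1.
    by rewrite -(Fp_nat_mod hp) (eqP hb) (Fp_nat_mod hp).
  apply: (mulfI u0); rewrite mulfV //.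
  by rewrite natrM natr_Zp in h.
exfalso.
have := none (Ordinal (val_lt u^-1)); rewrite /=.
have e : ((nat_of_ord u * nat_of_ord (u^-1))%:R : F) = 1.
  by rewrite natrM !natr_Zp mulfV.
have := congr1 (@nat_of_ord _) e; rewrite (val_Fp_nat hp).
have -> : nat_of_ord (1 : F) = (1 %% p)%N by rewrite -(val_Fp_nat hp 1).
by move=> ->; rewrite eqxx.
Qed.


Lemma T_eq (n1 n2 n3 m : int) :
  T R p n1 n2 n3 m = g ^+ 3 * tau (m%:~R - (n1%:~R ^+ 2 + n2%:~R ^+ 2 + n3%:~R ^+ 2) / 4%:R).
Proof.
set K : F := (m%:~R - _ / _).
have cpp : coprime p p = false.
  by rewrite /coprime gcdnn; apply/negbTE; rewrite neq_ltn prime_gt1 ?orbT.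
have c0p : coprime 0 p = false.
  by rewrite /coprime gcd0n; apply/negbTE; rewrite neq_ltn prime_gt1 ?orbT.
pose h := fun a : nat => if coprime a p then
     S R p a%:Z n1 * S R p a%:Z n2 * S R p a%:Z n3
     * ee (((invmod p a)%:Z * m)%:~R / (p%:R : R)) else 0.
rewrite /T big_mkcond /= -/h big_nat_recr //=; last exact: p0.
rewrite cpp addr0.
transitivity (\sum_(0 <= a < p) h a).
  by rewrite [RHS](big_ltn p0) {1}/h c0p add0r.
rewrite -(sumF h) /tau big_distrr /=.
rewrite [RHS](reindex_inj invr_inj) /=.
apply: eq_bigr => u _.
rewrite /h copF epsV.
case: (eqVneq u 0) => [->|u0] /=; first by rewrite eps0 mul0r mulr0.
rewrite !S_psi ?natr_Zp //.
have -> : ee ((((invmod p (nat_of_ord u))%:Z * m)%:~R) / (p%:R : R)) = psi (u^-1 * m%:~R).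
  have e1 : ((invmod p (nat_of_ord u))%:R : F) * m%:~R =
            (((invmod p (nat_of_ord u))%:Z * m)%:~R) by rewrite rmorphM.
  by rewrite -(@invmod_F u u0) e1 psi_int.
have e3 : eps u * eps u * eps u = eps u by rewrite (@eps_sq u u0) mul1r.
have f0 : (4%:R : F) != 0.
  by rewrite (_ : 4 = 2 * 2)%N // natrM mulf_neq0 // (@two_neq0 p hp hp2).
have ps : psi (- (n1%:~R ^+ 2 / (4%:R * u))) * psi (- (n2%:~R ^+ 2 / (4%:R * u))) *
    psi (- (n3%:~R ^+ 2 / (4%:R * u))) * psi (u^-1 * m%:~R) = psi (K / u).
  rewrite -!psi_add; congr psi; rewrite /K; field.
  by rewrite f0 u0.
rewrite -ps -[in RHS]e3; ring.
Qed.


Lemma norm_eps t : t != 0 -> `|eps t| = 1.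
Proof. by move=> t0; rewrite /eps (negbTE t0); case: ifP => _; rewrite ?normrN normr1. Qed.

Lemma part2 (n1 n2 n3 m : int) : `|T R p n1 n2 n3 m| <= ((p%:R : R) ^+ 2)%:C.
Proof.
rewrite T_eq.
set K := (_ - _).
have gn : `|g| ^+ 2 = p%:R by rewrite sqr_normc g_norm.
case: (eqVneq K 0) => [->|K0].
  by rewrite tau0 mulr0 normr0 ler0c exprn_ge0 // ler0n.
rewrite (@tau_eps K K0) normrM normrX normrM (@norm_eps K K0) mul1r.
have -> : `|g| ^+ 3 * `|g| = (`|g| ^+ 2) ^+ 2 by rewrite -exprSr -exprM.
by rewrite gn rmorphXn rmorph_nat.
Qed.

End Part2.

Theorem lemma3p7 (R : realType) (p : nat) (hp : prime p) (hp2 : (2 < p)%N) :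
  (forall (r : nat) (n1 n2 n3 m : int), (0 < r)%N ->
     `|T R (p ^ r)%N n1 n2 n3 m| <= ((p%:R : R) `^ (5 * r%:R / 2))%:C)
  /\
  (forall (n1 n2 n3 m : int),
     `|T R p n1 n2 n3 m| <= ((p%:R : R) ^+ 2)%:C).
Proof.
split.
  by move=> r n1 n2 n3 m r0; apply: part1.
by move=> n1 n2 n3 m; apply: part2.
Qed.
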